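(* Let $g:\mathbb{R}^n\setminus\{0\}\to\mathbb{R}^n$ denote the gradient $\nabla f$ of a function $f$, let $\tfrac14<\tau<1$ and $\epsilon>0$. Let $\mathbf{x}_0,\mathbf{x}_1,\mathbf{x}_2,\dots$ be nonzero vectors, and define $\mathbf{p}_0=\nabla f(\mathbf{x}_0)$ and, for $k\ge1$, $$\mathbf{p}_k=\nabla f(\mathbf{x}_k)+\beta_{k-1}\mathbf{d}_{k-1},\qquad \mathbf{d}_{k-1}=\mathbf{x}_k-\mathbf{x}_{k-1},\quad \mathbf{y}_{k-1}=\nabla f(\mathbf{x}_k)-\nabla f(\mathbf{x}_{k-1}),$$ where $\beta_{k-1}=\max(0,\tilde\beta_{k-1})$ with $$\tilde\beta_{k-1}=\begin{cases}\left(\tau\,\mathbf{d}_{k-1}\dfrac{\|\mathbf{y}_{k-1}\|^2}{\mathbf{d}_{k-1}^\top\mathbf{y}_{k-1}}-\mathbf{y}_{k-1}\right)^{\!\top}\dfrac{\nabla f(\mathbf{x}_k)}{\mathbf{d}_{k-1}^\top\mathbf{y}_{k-1}} & \text{if } |\mathbf{d}_{k-1}^\top\mathbf{y}_{k-1}|\ge\epsilon\|\mathbf{d}_{k-1}\|\|\mathbf{y}_{k-1}\| \text{ (and } \mathbf{d}_{k-1}^\top\mathbf{y}_{k-1}\neq0),\\ 0&\text{otherwise.}\end{cases}$$ Then for every $k\ge0$, $$\mathbf{p}_k^\top\nabla f(\mathbf{x}_k)\ge\Big(1-\frac{1}{4\tau}\Big)\|\nabla f(\mathbf{x}_k)\|^2,$$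 and there is a constant $M_0>1$, independent of $k$, such that $\|\mathbf{p}_k\|\le M_0\|\nabla f(\mathbf{x}_k)\|$ for all $k$.
   Context: $\|\cdot\|$ is the Euclidean norm. In the paper $f$ is the objective $f(\mathbf{x})=(r-1)!\,\mathcal{A}\mathbf{x}^r/\|\mathbf{x}\|_p^r$ of the $p$-spectral radius problem, but the statement only uses that $\nabla f$ is a vector-valued map. *)

(* Defs.v *)
From HB Require Import structures.
From mathcomp Require Import all_boot all_order all_algebra.
From mathcomp Require Import reals.
Set Implicit Arguments. Unset Strict Implicit. Unset Printing Implicit Defensive.
Import Order.TTheory GRing.Theory Num.Theory.
Local Open Scope ring_scope.

Definition dotv (R : realType) (n : nat) (u v : 'rV[R]_n) : R := (u *m v^T) 0 0.
Definition enorm (R : realType) (n : nat) (u : 'rV[R]_n) : R := Num.sqrt (dotv u u).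

Section CG.
Variables (R : realType) (n : nat).
Variables (g : 'rV[R]_n -> 'rV[R]_n) (tau eps : R) (x : nat -> 'rV[R]_n).

(* d_{k-1} = x_k - x_{k-1},  y_{k-1} = g(x_k) - g(x_{k-1}); we index by k-1 =: j *)
Definition dir (j : nat) : 'rV[R]_n := x j.+1 - x j.
Definition ydif (j : nat) : 'rV[R]_n := g (x j.+1) - g (x j).

Definition beta_tilde (j : nat) : R :=
  let d := dir j in let y := ydif j in let dy := dotv d y in
  if (dy != 0) && (eps * enorm d * enorm y <= `|dy|) then
    dotv (((tau * (enorm y ^+ 2 / dy)) *: d) - y) ((dy^-1) *: g (x j.+1))
  else 0.

Definition beta (j : nat) : R := Num.max 0 (beta_tilde j).

Definition pdir (k : nat) : 'rV[R]_n :=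
  match k with
  | 0 => g (x 0)
  | j.+1 => g (x j.+1) + beta j *: dir j
  end.
End CG.

(* Main.v *)
Require Import Defs.
From HB Require Import structures.
From mathcomp Require Import all_boot all_order all_algebra.
From mathcomp Require Import reals.
From mathcomp Require Import ring lra.
Import Order.TTheory GRing.Theory Num.Theory.
Local Open Scope ring_scope.

Section Aux.
Context {R : realType} {n : nat}.
Implicit Types (u v w : 'rV[R]_n) (a : R).

Lemma dotvE u v : dotv u v = \sum_i u 0 i * v 0 i.
Proof. by rewrite /dotv mxE; apply: eq_bigr => i _; rewrite mxE. Qed.

Lemma dotvC u v : dotv u v = dotv v u.
Proof. by rewrite !dotvE; apply: eq_bigr => i _; rewrite mulrC. Qed.

Lemma dotvDl u v w : dotv (u + v) w = dotv u w + dotv v w.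
Proof. by rewrite !dotvE -big_split; apply: eq_bigr => i _; rewrite mxE mulrDl. Qed.

Lemma dotvZl a u w : dotv (a *: u) w = a * dotv u w.
Proof. by rewrite !dotvE mulr_sumr; apply: eq_bigr => i _; rewrite mxE mulrA. Qed.

Lemma dotvNl u w : dotv (- u) w = - dotv u w.
Proof. by rewrite -scaleN1r dotvZl mulN1r. Qed.

Lemma dotvDr u v w : dotv w (u + v) = dotv w u + dotv w v.
Proof. by rewrite dotvC dotvDl !(dotvC w). Qed.

Lemma dotvZr a u w : dotv w (a *: u) = a * dotv w u.
Proof. by rewrite dotvC dotvZl dotvC. Qed.

Lemma dotvNr u w : dotv w (- u) = - dotv w u.
Proof. by rewrite dotvC dotvNl dotvC. Qed.

Lemma dotv_ge0 u : 0 <= dotv u u.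
Proof. by rewrite dotvE; apply: sumr_ge0 => i _; rewrite -expr2 sqr_ge0. Qed.

Lemma dotv_eq0 u : dotv u u = 0 -> u = 0.
Proof.
rewrite dotvE => /eqP; rewrite psumr_eq0; last by move=> i _; rewrite -expr2 sqr_ge0.
move=> /allP H; apply/rowP => i; rewrite mxE.
have := H i (mem_index_enum _); rewrite implyTb mulf_eq0 orbb.
by move/eqP.
Qed.

Lemma enorm_sq u : enorm u ^+ 2 = dotv u u.
Proof. by rewrite /enorm sqr_sqrtr // dotv_ge0. Qed.

Lemma enorm_ge0 u : 0 <= enorm u.
Proof. by rewrite /enorm sqrtr_ge0. Qed.

Lemma CS2 u v : dotv u v ^+ 2 <= dotv u u * dotv v v.
Proof.
have [v0|vp] := eqVneq (dotv v v) 0.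
  have z : forall w : 'rV[R]_n, dotv w 0 = 0.
    by move=> w; rewrite dotvE big1 // => i _; rewrite mxE mulr0.
  by rewrite (dotv_eq0 _ v0) !z expr2 !mulr0.
have vp' : 0 < dotv v v by rewrite lt_neqAle eq_sym vp dotv_ge0.
have E : dotv (dotv v v *: u - dotv u v *: v) (dotv v v *: u - dotv u v *: v)
   = dotv v v * (dotv v v * dotv u u - dotv u v ^+ 2).
  rewrite !(dotvDl, dotvDr, dotvNl, dotvNr, dotvZl, dotvZr) (dotvC v u); ring.
have := dotv_ge0 (dotv v v *: u - dotv u v *: v); rewrite E.
rewrite pmulr_rge0 // subr_ge0 => H2; by rewrite mulrC.
Qed.

Lemma CS u v : `|dotv u v| <= enorm u * enorm v.
Proof.
have h1 := enorm_ge0 u; have h2 := enorm_ge0 v.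
have : `|dotv u v| ^+ 2 <= (enorm u * enorm v) ^+ 2.
  by rewrite real_normK ?num_real // exprMn !enorm_sq CS2.
have h5 : 0 <= enorm u * enorm v by apply: mulr_ge0.
move: h5; set N := enorm u * enorm v; set c := `|dotv u v|.
have := normr_ge0 (dotv u v); rewrite -/c => h3 h5 h4; nra.
Qed.

Lemma enormD u v : enorm (u + v) <= enorm u + enorm v.
Proof.
have h1 := enorm_ge0 u; have h2 := enorm_ge0 v; have h0 := enorm_ge0 (u + v).
have : enorm (u + v) ^+ 2 <= (enorm u + enorm v) ^+ 2.
  rewrite enorm_sq sqrrD !enorm_sq dotvDl !dotvDr (dotvC v u).
  have := CS u v; have := ler_norm (dotv u v); lra.
move: h0 h1 h2; set a := enorm (u + v); set b := enorm u; set c := enorm v.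
move=> *; nra.
Qed.

Lemma enormZ a u : enorm (a *: u) = `|a| * enorm u.
Proof.
by rewrite /enorm dotvZl dotvZr mulrA -expr2 sqrtrM ?sqr_ge0 // sqrtr_sqr.
Qed.

Lemma dotv_bt (c s : R) u v w :
  dotv (c *: u - v) (s *: w) = s * (c * dotv u w - dotv v w).
Proof. by rewrite dotvZr dotvDl dotvNl dotvZl. Qed.

End Aux.

Lemma part1_scalar (R : realType) (tau Y N a u : R) :
  0 < tau -> 0 <= Y -> 0 <= N -> `|a| <= Y * N ->
  (1 - (4 * tau)^-1) * N ^+ 2 <= N ^+ 2 + (tau * Y ^+ 2 * u ^+ 2 - a * u).
Proof.
move=> t0 Y0 N0 ha.
set s := Y * `|u|.
have s0 : 0 <= s by rewrite mulr_ge0.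
have au : a * u <= N * s.
  apply: (le_trans (ler_norm _)); rewrite normrM /s.
  by rewrite mulrA [N * Y]mulrC ler_wpM2r.
have us : tau * Y ^+ 2 * u ^+ 2 = tau * s ^+ 2.
  by rewrite /s exprMn (real_normK (num_real u)) [RHS]mulrA.
have E : (2 * tau * s - N) ^+ 2 * (4 * tau)^-1
         = tau * s ^+ 2 - N * s + N ^+ 2 * (4 * tau)^-1.
  field; lra.
have : 0 <= (2 * tau * s - N) ^+ 2 * (4 * tau)^-1.
  by rewrite mulr_ge0 ?sqr_ge0 // invr_ge0; lra.
rewrite E us; lra.
Qed.

Lemma part2_scalar (R : realType) (tau eps Y D N dy dG yG : R) :
  0 < tau -> 0 < eps -> 0 <= Y -> 0 <= D -> 0 <= N -> dy != 0 ->
  `|dG| <= D * N -> `|yG| <= Y * N -> eps * D * Y <= `|dy| ->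
  dy^-1 * (tau * (Y ^+ 2 / dy) * dG - yG) * D
    <= (tau * (eps^-1) ^+ 2 + eps^-1) * N.
Proof.
move=> t0 e0 Y0 D0 N0 dy0 hG hy hc.
set A := `|dy|.
have A0 : 0 < A by rewrite normr_gt0.
set r := Y * D / A.
have r0 : 0 <= r by rewrite /r divr_ge0 ?mulr_ge0 ?normr_ge0.
have er : r <= eps^-1.
  rewrite /r ler_pdivrMr //.
  have -> : Y * D = eps^-1 * (eps * D * Y) by field; apply: lt0r_neq0.
  by apply: ler_wpM2l; rewrite // invr_ge0 ltW.
set P := dG / dy ^+ 2.
set Q := yG / dy.
have LE : dy^-1 * (tau * (Y ^+ 2 / dy) * dG - yG) * D = tau * (Y ^+ 2 * D * P) - D * Q.
  by rewrite /P /Q; field.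
have PA : `|P| <= D * N / A ^+ 2.
  rewrite ler_pdivlMr ?exprn_gt0 // /P normrM normrV ?unitfE ?expf_neq0 //.
  by rewrite normrX -/A mulfVK ?expf_neq0 ?lt0r_neq0.
have QA : `|Q| <= Y * N / A.
  rewrite ler_pdivlMr // /Q normrM normrV ?unitfE // -/A mulfVK ?lt0r_neq0 //.
have h1 : Y ^+ 2 * D * P <= r ^+ 2 * N.
  have e : r ^+ 2 * N = Y ^+ 2 * D * (D * N / A ^+ 2).
    by rewrite /r; field; apply: lt0r_neq0.
  rewrite e; apply: ler_wpM2l; first by rewrite ?mulr_ge0 ?sqr_ge0.
  exact: le_trans (ler_norm _) PA.
have h2 : - (D * Q) <= r * N.
  have e : r * N = D * (Y * N / A) by rewrite /r; field; apply: lt0r_neq0.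
  rewrite e -mulrN; apply: ler_wpM2l => //.
  apply: le_trans QA; rewrite -normrN; exact: ler_norm.
have h3 : r ^+ 2 <= (eps^-1) ^+ 2.
  have : 0 <= eps^-1 by rewrite invr_ge0 ltW.
  move: er; set e := eps^-1 => er e0'; nra.
rewrite LE.
have h4 : tau * (Y ^+ 2 * D * P) <= tau * ((eps^-1) ^+ 2 * N).
  apply: ler_wpM2l; first exact: ltW.
  apply: (le_trans h1); exact: ler_wpM2r.
have h5 : r * N <= eps^-1 * N by apply: ler_wpM2r.
lra.
Qed.


Theorem lemma3p3 (R : realType) (n : nat) (g : 'rV[R]_n -> 'rV[R]_n)
  (tau eps : R) (x : nat -> 'rV[R]_n) :
  4^-1 < tau -> tau < 1 -> 0 < eps ->
  (forall k, x k != 0) ->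
  (forall k, (1 - (4 * tau)^-1) * enorm (g (x k)) ^+ 2
               <= dotv (pdir g tau eps x k) (g (x k)))
  /\ (exists M0 : R, 1 < M0 /\
        forall k, enorm (pdir g tau eps x k) <= M0 * enorm (g (x k))).
Proof.
move=> t1 t2 e0 _.
have t0 : 0 < tau.
  have h : (0:R) < 4^-1 by rewrite invr_gt0.
  lra.
have c0 : 0 <= (4 * tau)^-1.
  by rewrite invr_ge0; apply: mulr_ge0; [lra | exact: ltW].
have base : forall G : 'rV[R]_n, (1 - (4 * tau)^-1) * enorm G ^+ 2 <= dotv G G.
  move=> G; rewrite -enorm_sq; have := sqr_ge0 (enorm G); nra.
set M0 := 2 + tau * (eps^-1) ^+ 2 + eps^-1.
have ie0 : 0 <= eps^-1 by rewrite invr_ge0 ltW.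
have M1 : 1 < M0.
  rewrite /M0; have := sqr_ge0 (eps^-1); move: ie0; set e := eps^-1 => ie0 h; nra.
have baseM : forall G : 'rV[R]_n, enorm G <= M0 * enorm G.
  move=> G; have := enorm_ge0 G; move: M1; set N := enorm G => *; nra.
split; last first.
  exists M0; split => // -[|j] /=; first exact: baseM.
  set G := g (x j.+1); set d := dir x j; set y := ydif g x j.
  rewrite /beta /beta_tilde -/d -/y.
  case: ifP => [/andP[dy0 hc]|_]; last by rewrite maxxx scale0r addr0 baseM.
  set bt := dotv _ _.
  have [bz|bp] := leP bt 0.
    by rewrite scale0r addr0 baseM.
  apply: (le_trans (enormD _ _)); rewrite enormZ gtr0_norm //.
  have H : bt * enorm d <= (tau * (eps^-1) ^+ 2 + eps^-1) * enorm G.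
    have -> : bt = (dotv d y)^-1 * (tau * (enorm y ^+ 2 / dotv d y) * dotv d G - dotv y G).
      by rewrite /bt dotv_bt.
    apply: part2_scalar => //; rewrite ?enorm_ge0 //.
      exact: CS.
    exact: CS.
  have := enorm_ge0 G; rewrite /M0; lra.
case=> [|j] /=; first exact: base.
set G := g (x j.+1); set d := dir x j; set y := ydif g x j.
rewrite /beta /beta_tilde -/d -/y dotvDl dotvZl.
case: ifP => [/andP[dy0 hc]|_]; last by rewrite maxxx mul0r addr0 base.
set bt := dotv (_ - _) _.
have [bz|bp] := leP bt 0.
  by rewrite mul0r addr0 base.
rewrite -enorm_sq.
have -> : bt * dotv d G = tau * enorm y ^+ 2 * (dotv d G / dotv d y) ^+ 2
            - dotv y G * (dotv d G / dotv d y).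
  rewrite /bt dotv_bt; field; exact: dy0.
apply: part1_scalar => //; rewrite ?enorm_ge0 //.
exact: CS.
Qed.
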